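(* Let $A=\{a_1,\ldots,a_k\}$ be a multiset of $k$ nonnegative integers (not necessarily distinct). If a tree $T$ has order at most $\sum_{i=1}^k a_i+\max\{a_i : 1\le i\le k\}-1$, then $T$ is $A$-burnable.
   Context: For a vertex $u$ of a graph and an integer $m$, $N_m[u]$ denotes the set of vertices at distance at most $m$ from $u$ (so $N_m[u]=\emptyset$ if $m<0$). For a multiset $A$ of integers $a_1,\ldots,a_k$, a graph $G$ is called $A$-burnable if there exist $k$ vertices $v_1,\ldots,v_k$ of $G$ (not necessarily distinct) such that $V(G)\subseteq\bigcup_{i=1}^k N_{a_i-1}[v_i]$. The order of a graph is its number of vertices. *)

(* Defs.v *)
From mathcomp Require Import all_boot all_order all_algebra.
Set Implicit Arguments. Unset Strict Implicit. Unset Printing Implicit Defensive.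
Import GRing.Theory Num.Theory.

Definition simple_graph (T : finType) (e : rel T) : Prop :=
  symmetric e /\ irreflexive e.

(* A cycle is a closed walk x, p_1, ..., p_n, x with n >= 2 and the vertices
   x, p_1, ..., p_n pairwise distinct (so of length >= 3). *)
Definition acyclic (T : finType) (e : rel T) : Prop :=
  forall (x : T) (p : seq T),
    path e x p -> uniq (x :: p) -> (2 <= size p)%N -> ~~ e (last x p) x.

Definition is_tree (T : finType) (e : rel T) : Prop :=
  [/\ simple_graph e, (0 < #|T|)%N, (forall x y : T, connect e x y) & acyclic e].

(* dist(u,v) <= m, i.e. v \in N_m[u]: there is a walk from u to v with at most
   m edges.  m is an integer, so N_m[u] is empty when m < 0. *)
Definition within (T : finType) (e : rel T) (u v : T) (m : int) : Prop :=
  exists p : seq T, [/\ path e u p, last u p = v & ((size p)%:Z <= m)%R].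

Definition ball (T : finType) (e : rel T) (m : int) (u : T) : T -> Prop :=
  fun v => within e u v m.

(* The multiset A = {a_1, ..., a_k} is represented by the sequence A (of
   length k).  G is A-burnable iff there are vertices v_1..v_k with
   V(G) included in the union of the N_{a_i - 1}[v_i]. *)
Definition burnable (T : finType) (e : rel T) (A : seq nat) : Prop :=
  exists v : 'I_(size A) -> T,
    forall x : T, exists i : 'I_(size A),
      ball e ((nth 0%N A i)%:Z - 1)%R (v i) x.

(* Main.v *)
Require Import Defs.
From mathcomp Require Import all_boot all_order all_algebra.
From mathcomp Require Import zify.
Set Implicit Arguments. Unset Strict Implicit. Unset Printing Implicit Defensive.

Lemma bfs (T : finType) (e : rel T) (r : T) : (forall x, connect e x r) ->
  exists (par : T -> T) (h : T -> nat), [/\ h r = 0, forall x, h x = 0 -> x = r,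
    forall x, h (par x) = (h x).-1 & forall x, x != r -> e x (par x)].
Proof.
move=> Hc.
pose P x n := [exists p : n.-tuple T, path e x p && (last x p == r)].
have Pseq x (p : seq T) : path e x p -> last x p = r -> P x (size p).
  by move=> Hp Hl; apply/existsP; exists (in_tuple p); rewrite /= Hp Hl eqxx.
have Pex x n : P x n -> exists p : seq T, [/\ path e x p, last x p = r & size p = n].
  by case/existsP => t /andP[Hp /eqP Hl]; exists t; rewrite size_tuple.
have HP x : exists n, P x n.
  by case/connectP: (Hc x) => p Hp Hl; exists (size p); apply: Pseq => //; rewrite Hl.
pose h x := ex_minn (HP x).
have hP x : P x (h x) by rewrite /h; case: ex_minnP.
have hmin x n : P x n -> h x <= n by rewrite /h; case: ex_minnP => m _ H; apply: H.
have Hr0 x : h x = 0 -> x = r.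
  move=> H; have := hP x; rewrite H => /Pex [p [_ Hl /size0nil Hp]].
  by rewrite -Hl Hp.
have Hhr : h r = 0.
  apply/eqP; rewrite -leqn0; apply: hmin; exact: (Pseq r [::]).
have step x : x != r -> exists y, e x y && (h y == (h x).-1).
  move=> Hx; have [p [Hp Hl Hs]] := Pex _ _ (hP x).
  case: p Hp Hl Hs => [|y p] /=; first by move=> _ Hl; rewrite Hl eqxx in Hx.
  move=> /andP[Hxy Hp] Hl Hs; exists y; rewrite Hxy /=.
  have H1 : h y <= size p by apply: hmin; apply: Pseq.
  have [q [Hq Hlq Hsq]] := Pex _ _ (hP y).
  have H2 : h x <= (size q).+1.
    apply: hmin; apply: (Pseq x (y :: q)) => /=; by rewrite ?Hxy ?Hq ?Hlq.
  apply/eqP; lia.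
pose par x := if x == r then r else odflt r [pick y | e x y && (h y == (h x).-1)].
exists par, h; split => //.
- move=> x; rewrite /par; case: eqP => [->|/eqP Hx]; first by rewrite Hhr.
  case: pickP => [y /andP[_ /eqP] //|H]. case: (step x Hx) => y Hy; by rewrite H in Hy.
- move=> x Hx; rewrite /par (negbTE Hx).
  case: pickP => [y /andP[] //|H]. case: (step x Hx) => y Hy; by rewrite H in Hy.
Qed.

Section Burn.
Variables (T : finType) (e : rel T) (r : T) (par : T -> T) (h : T -> nat).
Hypothesis esym : symmetric e.
Hypothesis Hhr : h r = 0.
Hypothesis Hr0 : forall x, h x = 0 -> x = r.
Hypothesis Hh : forall x, h (par x) = (h x).-1.
Hypothesis He : forall x, x != r -> e x (par x).

Definition wk (a b : T) (n : nat) :=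
  exists p, [/\ path e a p, last a p = b & size p = n].

Lemma wk_cat a b c n m : wk a b n -> wk b c m -> wk a c (n + m).
Proof.
case=> p [Hp Hl Hs] [q [Hq Hl' Hs']]; exists (p ++ q).
by rewrite cat_path last_cat Hl Hp Hq size_cat Hs Hs'.
Qed.

Lemma wk_within a b n (m : int) : wk a b n -> (n%:Z <= m)%R -> within e a b m.
Proof. by case=> p [Hp Hl Hs] Hm; exists p; rewrite Hs. Qed.

Lemma h_iter t x : h (iter t par x) = h x - t.
Proof. elim: t => [|t IH] /=; first by rewrite subn0. by rewrite Hh IH subnS. Qed.

Lemma iter_h x : iter (h x) par x = r.
Proof. by apply: Hr0; rewrite h_iter subnn. Qed.

Lemma ne_r x : 0 < h x -> x != r.
Proof. by apply: contraTneq => ->; rewrite Hhr. Qed.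

Lemma up_walk j x : j <= h x -> wk (iter j par x) x j.
Proof.
elim: j x => [|j IH] x Hj; first by exists [::].
rewrite iterSr.
have Hj' : j <= h (par x) by rewrite Hh; lia.
case: (IH _ Hj') => p [Hp Hl Hs].
have Hx : x != r by apply: ne_r; lia.
exists (rcons p x); rewrite rcons_path Hp Hl last_rcons size_rcons Hs; split=> //.
by rewrite /= esym He.
Qed.

Lemma down_walk j x : j <= h x -> wk x (iter j par x) j.
Proof.
elim: j x => [|j IH] x Hj; first by exists [::].
rewrite iterSr.
have Hj' : j <= h (par x) by rewrite Hh; lia.
case: (IH _ Hj') => p [Hp Hl Hs].
have Hx : x != r by apply: ne_r; lia.
exists (par x :: p); split=> //=; last by rewrite Hs.
by rewrite Hp He.
Qed.

Definition closed (S : {set T}) := forall x, x \in S -> par x \in S.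

Lemma closed_iter S t x : closed S -> x \in S -> iter t par x \in S.
Proof. by move=> HS Hx; elim: t => //= t IH; apply: HS. Qed.

Definition sub v := [set x | (h v <= h x) && (iter (h x - h v) par x == v)].

Lemma sub_up v t y : iter t par y \in sub v -> y \in sub v.
Proof.
rewrite /sub !inE h_iter => /andP[H1 /eqP H2].
case: (leqP t (h y)) => Ht.
  apply/andP; split; first lia.
  have -> : h y - h v = (h y - t - h v) + t by lia.
  by rewrite iterD H2.
have Hv : h v = 0 by lia.
by rewrite (Hr0 Hv) Hhr subn0 iter_h eqxx leq0n.
Qed.

Lemma closed_out S v : closed S -> closed (S :\: sub v).
Proof.
move=> HS x; rewrite !in_setD => /andP[Hn Hx]; rewrite HS // andbT.
apply/negP => H; move/negP: Hn; apply; exact: (@sub_up v 1 x H).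
Qed.

Lemma uniq_iter x a n : a + n <= (h x).+1 -> uniq [seq iter t par x | t <- iota a n].
Proof.
move=> Han; rewrite map_inj_in_uniq ?iota_uniq // => t1 t2.
rewrite !mem_iota => /andP[_ H1] /andP[_ H2] Heq.
have := congr1 h Heq; rewrite !h_iter; lia.
Qed.

Lemma size_card (s : seq T) (A : {set T}) : uniq s -> {subset s <= A} -> size s <= #|A|.
Proof.
move=> Hu Hs; rewrite cardE; apply: uniq_leq_size => // x /Hs; by rewrite mem_enum.
Qed.

Lemma deep S u m v : closed S -> u \in S -> (forall x, x \in S -> h x <= h u) ->
  0 < m <= h u -> v = iter m.-1 par u ->
  [/\ forall x, x \in S -> x \in sub v -> exists2 n, n <= m.-1 & wk v x n,
      m + #|S :\: sub v| <= #|S| & h v = h u - m.-1].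
Proof.
move=> HS Hu Hmax /andP[Hm0 Hmu] Hvd.
have Hv : h v = h u - m.-1 by rewrite Hvd h_iter.
split=> //.
- move=> x Hx; rewrite /sub inE => /andP[H1 /eqP H2].
  exists (h x - h v); first by have := Hmax x Hx; lia.
  by have := up_walk (leq_subr (h v) (h x)); rewrite H2.
- rewrite -(cardsID (sub v) S) leq_add2r.
  have Hs : uniq [seq iter t par u | t <- iota 0 m] by apply: uniq_iter; lia.
  suff: {subset [seq iter t par u | t <- iota 0 m] <= S :&: sub v}.
    by move/(size_card Hs); rewrite size_map size_iota.
  move=> z /mapP [t]; rewrite mem_iota => /andP[_ Ht] ->.
  rewrite in_setI closed_iter //= /sub inE h_iter Hv.
  apply/andP; split; first lia.
  rewrite -iterD Hvd.
  have -> : h u - t - (h u - m.-1) + t = m.-1 by lia.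
  by [].
Qed.

Lemma peel S m : closed S -> r \in S ->
  exists w (R : {set T}), [/\ R \subset S, closed (S :\: R),
    (forall x, x \in R -> within e w x (m%:Z - 1)%R) &
    (m + #|S :\: R| <= #|S| \/ S :\: R = set0)].
Proof.
move=> HS Hr.
case: m => [|m].
  exists r, set0; split; rewrite ?sub0set ?setD0 //; last by left.
  by move=> x; rewrite in_set0.
case: (@arg_maxnP T r (fun x => x \in S) h Hr) => u Hu Hmax.
case: (leqP (h u) m) => Hum.
  exists r, S; split => //; last by right; rewrite setDv.
    by rewrite setDv => x; rewrite in_set0.
  move=> x Hx; apply: (wk_within (n := h x)).
    by have := up_walk (leqnn (h x)); rewrite iter_h.
  have := Hmax x Hx; lia.
have [Ha Hb Hc] := @deep S u m.+1 _ HS Hu Hmax (introT andP (conj (ltn0Sn m) Hum)) erefl.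
exists (iter m par u), (S :&: sub (iter m par u)).
have -> : S :\: (S :&: sub (iter m par u)) = S :\: sub (iter m par u).
  by apply/setP => x; rewrite !in_setD in_setI; case: (x \in S); case: (x \in sub _).
split; first exact: subsetIl.
- exact: closed_out.
- move=> x; rewrite in_setI => /andP[Hx Hs]; case: (Ha x Hx Hs) => n Hn Hw.
  apply: (wk_within Hw); lia.
- by left.
Qed.

Lemma center S M : closed S -> r \in S -> #|S| + 1 <= M + M ->
  exists w, forall x, x \in S -> within e w x (M%:Z - 1)%R.
Proof.
move=> HS Hr HM.
case: (@arg_maxnP T r (fun x => x \in S) h Hr) => u Hu Hmax.
case: (ltnP (h u) M) => Hum.
  exists r => x Hx; apply: (wk_within (n := h x)).
    by have := up_walk (leqnn (h x)); rewrite iter_h.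
  have := Hmax x Hx; lia.
have HM0 : 0 < M by lia.
set v := iter M.-1 par u.
have [Ha Hb Hc] := @deep S u M v HS Hu Hmax (introT andP (conj HM0 Hum)) erefl.
exists v => y Hy.
case: (boolP (y \in sub v)) => Hyn.
  by case: (Ha y Hy Hyn) => n Hn Hw; apply: (wk_within Hw); lia.
have Hv1 : 0 < h v by lia.
pose Anc z := (h z < h v) && (iter (h v - h z) par v == z).
have HP : exists t, Anc (iter t par y).
  by exists (h y); rewrite /Anc iter_h Hhr subn0 iter_h eqxx andbT.
case: (@ex_minnP (fun t => Anc (iter t par y)) HP) => j Hj Hmin.
have Hjy : j <= h y by apply: Hmin; rewrite /Anc iter_h Hhr subn0 iter_h eqxx andbT.
move: Hj; rewrite /Anc => /andP[Hz1 /eqP Hz2].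
have W1 := down_walk (leq_subr (h (iter j par y)) (h v)); rewrite Hz2 in W1.
have W := wk_cat W1 (up_walk Hjy).
apply: (wk_within W).
have Hcnt : j + h v <= #|S :\: sub v|.
  pose s := [seq iter t par y | t <- iota 0 j] ++ [seq iter t par v | t <- iota 1 (h v)].
  have -> : j + h v = size s by rewrite size_cat !size_map !size_iota.
  apply: size_card.
    have U1 : uniq [seq iter t par y | t <- iota 0 j] by apply: uniq_iter; lia.
    have U2 : uniq [seq iter t par v | t <- iota 1 (h v)] by apply: uniq_iter; lia.
    rewrite cat_uniq U1 U2 andbT /=.
    apply/hasPn => z2 /mapP [t2]; rewrite mem_iota => /andP [Ht2a Ht2b] -> {z2}.
    apply/mapP => [[t1]]; rewrite mem_iota => /andP[_ Ht1] Heq.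
    have : Anc (iter t1 par y).
      rewrite -Heq /Anc h_iter; apply/andP; split; first lia.
      by have -> : h v - (h v - t2) = t2 by lia.
    move/Hmin; lia.
  move=> z; rewrite mem_cat => /orP[] /mapP [t]; rewrite mem_iota => /andP[Ha1 Hb1] ->;
    rewrite in_setD (closed_iter _ HS) ?andbT.
  - apply/negP => H; move/negP: Hyn; apply; exact: (sub_up H).
  - by [].
  - by rewrite /sub inE h_iter negb_and -ltnNge; apply/orP; left; lia.
  - exact: closed_iter.
have := leq_subr (h (iter j par y)) (h v); lia.
Qed.

Definition Cov (A : seq nat) (S : {set T}) := exists L : seq (nat * T),
  map fst L = A /\ forall x, x \in S -> exists2 p, p \in L & within e p.2 x ((p.1)%:Z - 1)%R.

Lemma Cov_empty A : Cov A set0.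
Proof.
exists [seq (a, r) | a <- A]; split; first by elim: A => //= a A ->.
by move=> x; rewrite in_set0.
Qed.

Lemma Cov_cons A S R a w : Cov A (S :\: R) ->
  (forall x, x \in R -> within e w x (a%:Z - 1)%R) -> Cov (a :: A) S.
Proof.
case=> L [HL Hc] HR; exists ((a,w)::L); split; first by rewrite /= HL.
move=> x Hx; case: (boolP (x \in R)) => HxR.
  by exists (a,w); rewrite ?mem_head //; apply: HR.
case: (Hc x) => [|p Hp Hw]; first by rewrite in_setD HxR Hx.
by exists p => //; rewrite inE Hp orbT.
Qed.

Lemma Cov_swap a b A S : Cov (a :: b :: A) S -> Cov (b :: a :: A) S.
Proof.
case=> [[|p [|q L]]] [//= HL Hc]; case: HL => Hp Hq HL.
exists [:: q, p & L]; split; first by rewrite /= Hp Hq HL.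
move=> x /Hc [s Hs Hw]; exists s => //; move: Hs; by rewrite !inE orbCA.
Qed.

Lemma main_gen n : forall A S, size A <= n -> closed S ->
  #|S| + 1 <= \sum_(a <- A) a + \max_(a <- A) a -> Cov A S.
Proof.
elim: n => [|n IH] [|a A] S //= HA HS; rewrite ?big_nil ?addn0 ?addn1 // => Hc.
case: (set_0Vmem S) => [-> | [x0 Hx0]]; first exact: Cov_empty.
have Hr : r \in S by rewrite -(iter_h x0) closed_iter.
case: A HA Hc => [|b A] HA Hc.
  rewrite !big_cons !big_nil in Hc.
  have [w Hw] := @center S a HS Hr (ltac:(lia)).
  exists [:: (a, w)]; split => // x /Hw H; exists (a,w) => //; exact: mem_head.
rewrite !big_cons in Hc.
set sA := \sum_(x <- A) x in Hc; set mA := \max_(x <- A) x in Hc.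
case: (leqP a (maxn b mA)) => Hab.
  have [w [R [HRS HRc HRw Hcnt]]] := peel a HS Hr.
  apply: (Cov_cons (R:=R) (w:=w)) => //.
  case: Hcnt => [Hcnt|->]; last exact: Cov_empty.
  apply: IH => //. rewrite !big_cons -/sA -/mA. lia.
have [w [R [HRS HRc HRw Hcnt]]] := peel b HS Hr.
apply: Cov_swap; apply: (Cov_cons (R:=R) (w:=w)) => //.
case: Hcnt => [Hcnt|->]; last exact: Cov_empty.
apply: IH => //=.
rewrite !big_cons -/sA -/mA. lia.
Qed.

End Burn.

Theorem lemma1 (T : finType) (e : rel T) (A : seq nat) :
  is_tree e ->
  (#|T| + 1 <= \sum_(a <- A) a + \max_(a <- A) a)%N ->
  burnable e A.
Proof.
case=> [[esym eirr] HT Hconn Hacyc] Hc.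
case/card_gt0P: HT => r _.
have [par [h [Hhr Hr0 Hh He]]] := bfs (fun x => Hconn x r).
have HS : closed par (setT : {set T}) by move=> x; rewrite inE.
have [L [HL Hcov]] := @main_gen T e r par h esym Hhr Hr0 Hh He (size A) A setT
  (leqnn _) HS (ltac:(by rewrite cardsT)).
have HsL : size L = size A by rewrite -HL size_map.
exists (fun i => (nth (0, r) L i).2) => x.
have [p Hp Hw] := Hcov x (in_setT x).
have Hi : index p L < size A by rewrite -HsL index_mem.
exists (Ordinal Hi) => /=.
rewrite /ball -HL (nth_map (0, r)) ?HsL // nth_index //.
Qed.
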